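(* Let $X$ be a finite set of clocks and $P$ a finite set of parameters, and let $Z$ be a parametric zone over $(X,P)$, written as a finite conjunction of constraints $Z=\bigwedge_i \phi_i$. Then: (1) The upper temporal bound of $Z$ satisfies $$\bigcup_{\psi\in U_{Temp}(Z)} UB(Z,\psi) \;=\; \Big\{\, v+\delta_{sup} \;\Big|\; v\in Z,\ \delta_{sup}=\sup\{\delta\in\mathbb{R}_{\ge 0}\mid v+\delta\in Z\}\in\mathbb{R}_{\ge 0}\,\Big\}.$$ (2) The lower temporal bound of $Z$ satisfies $$\bigcup_{\psi\in L_{Temp}(Z)} LB(Z,\psi) \;=\; \Big\{\, v-\delta_{sup} \;\Big|\; v\in Z,\ \delta_{sup}=\sup\{\delta\in\mathbb{R}_{\ge 0}\mid v-\delta\in Z\}\in\mathbb{R}_{\ge 0}\,\Big\}.$$ (In particular, the supremum is required to be finite; if $Z$ has no upper temporal constraint, both sides of (1) are empty.)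
   Context: A valuation is a pair $v=(v_X,v_P)$ with $v_X:X\to\mathbb{R}_{\ge0}$ and $v_P:P\to\mathbb{Q}_{\ge0}$. A linear term over $P$ is an expression $k_0+\sum_j k_j p_j$ with $k_j\in\mathbb{Q}$, $p_j\in P$; $v(plt)$ denotes its value under $v_P$. A parametric zone is a finite conjunction of constraints of the forms $x\sim plt$, $x-y\sim plt$, or $plt'\sim plt$, with $x,y\in X$, $plt,plt'$ linear terms over $P$ and ${\sim}\in\{<,\le,=,\ge,>\}$; it is identified with the set of valuations satisfying it. For $\delta\ge 0$, $v+\delta$ (resp. $v-\delta$) is the valuation that adds (resp. subtracts) $\delta$ to every clock value and leaves parameters unchanged; $v-\delta\in Z$ requires in particular all clock values to be nonnegative. Upper temporal constraints of $Z$, denoted $U_{Temp}(Z)$, are its conjuncts $x\sim plt$ with ${\sim}\in\{<,\le,=\}$; lower temporal constraints $L_{Temp}(Z)$ are its conjuncts $x\sim plt$ with ${\sim}\in\{>,\ge,=\}$, together with the implicit constraints $x\ge 0$ for every $x\in X$. All other conjuncts (of the form $x-y\sim plt$ or $plt'\sim plt$) are called diagonal constraints. The upper temporal closure $\overline{Z}^{U}$ of $Z$ is obtained by keeping diagonal constraints unchanged, making every upper temporal constraint non-strict ($<$ becomes $\le$) and every lower temporal constraint strict ($\ge$ becomes $>$, including the implicit $x\ge0$ which becomes $x>0$). The lower temporal closure $\overline{Z}^{L}$ is defined symmetrically: lower temporal constraints made non-strict, upper temporal constraints made strict, diagonal constraints unchanged. For an upper temporal constraint $\psi=(x\sim plt)$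 of $Z$, the temporal upper bound $UB(Z,\psi)$ is the zone obtained by replacing $x\le plt$ by $x=plt$ in $Z$ if $\psi$ is non-strict, or in $\overline{Z}^{U}$ if $\psi$ is strict. For a lower temporal constraint $\psi=(x\sim plt)$, the temporal lower bound $LB(Z,\psi)$ is obtained by replacing $x\ge plt$ by $x=plt$ in $Z$ if $\psi$ is non-strict, or in $\overline{Z}^{L}$ if $\psi$ is strict. *)

(* Defs.v *)
From Stdlib Require Import Reals QArith Qreals List.
Set Implicit Arguments.
Open Scope R_scope.

Inductive cmp := CLt | CLe | CEq | CGe | CGt.

Definition sem_cmp (k : cmp) (a b : R) : Prop :=
  match k with
  | CLt => a < b | CLe => a <= b | CEq => a = b | CGe => a >= b | CGt => a > b
  end.

Record lterm (P : Type) := LTerm { lt_const : Q ; lt_coeffs : list (Q * P) }.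

Record valuation (X P : Type) := Val { vX : X -> R ; vP : P -> Q }.

Definition valid_val (X P : Type) (v : valuation X P) : Prop :=
  (forall x, 0 <= vX v x) /\ (forall p, (0 <= vP v p)%Q).

Definition eval_lt (X P : Type) (v : valuation X P) (t : lterm P) : R :=
  Q2R (lt_const t + fold_right (fun kp acc => (fst kp * vP v (snd kp) + acc)%Q)
                                0%Q (lt_coeffs t))%Q.

Inductive constr (X P : Type) :=
| CClock : X -> cmp -> lterm P -> constr X P
| CDiag  : X -> X -> cmp -> lterm P -> constr X P
| CParam : lterm P -> cmp -> lterm P -> constr X P.
Arguments CClock {X P}.
Arguments CDiag {X P}.
Arguments CParam {X P}.

Definition zone (X P : Type) := list (constr X P).

Definition sat_constr (X P : Type) (c : constr X P) (v : valuation X P) : Prop :=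
  match c with
  | CClock x k t => sem_cmp k (vX v x) (eval_lt v t)
  | CDiag x y k t => sem_cmp k (vX v x - vX v y) (eval_lt v t)
  | CParam t' k t => sem_cmp k (eval_lt v t') (eval_lt v t)
  end.

(** Membership of a valuation in a zone (valuations are nonnegative, which
    also encodes the implicit constraints x >= 0). *)
Definition in_zone (X P : Type) (Z : zone X P) (v : valuation X P) : Prop :=
  valid_val v /\ forall j c, nth_error Z j = Some c -> sat_constr c v.

(** Time shifts v + d (use d < 0 for v - |d|); parameters unchanged. *)
Definition shift (X P : Type) (v : valuation X P) (d : R) : valuation X P :=
  Val (fun x => vX v x + d) (vP v).

Definition is_upper_cmp (k : cmp) : Prop := k = CLt \/ k = CLe \/ k = CEq.
Definition is_lower_cmp (k : cmp) : Prop := k = CGt \/ k = CGe \/ k = CEq.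
Definition is_strict (k : cmp) : bool :=
  match k with CLt | CGt => true | _ => false end.

(** An equality x = plt is both an upper (x <= plt)
    and a lower (x >= plt) temporal constraint; each half is transformed. *)
Definition sat_closU (X P : Type) (c : constr X P) (v : valuation X P) : Prop :=
  match c with
  | CClock x k t =>
      match k with
      | CLt | CLe => vX v x <= eval_lt v t
      | CGt | CGe => vX v x > eval_lt v t
      | CEq => vX v x <= eval_lt v t /\ vX v x > eval_lt v t
      end
  | _ => sat_constr c v
  end.

Definition sat_closL (X P : Type) (c : constr X P) (v : valuation X P) : Prop :=
  match c with
  | CClock x k t =>
      match k with
      | CLt | CLe => vX v x < eval_lt v t
      | CGt | CGe => vX v x >= eval_lt v t
      | CEq => vX v x >= eval_lt v t /\ vX v x < eval_lt v t
      end
  | _ => sat_constr c v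
  end.

(** The closures as sets (implicit x >= 0 becomes x > 0 in the upper closure
    and stays x >= 0 in the lower closure). *)
Definition in_closU (X P : Type) (Z : zone X P) (v : valuation X P) : Prop :=
  (forall x, 0 < vX v x) /\ (forall p, (0 <= vP v p)%Q) /\
  (forall j c, nth_error Z j = Some c -> sat_closU c v).

Definition in_closL (X P : Type) (Z : zone X P) (v : valuation X P) : Prop :=
  valid_val v /\ (forall j c, nth_error Z j = Some c -> sat_closL c v).

Definition in_UTemp (X P : Type) (Z : zone X P) (i : nat) : Prop :=
  exists x k t, nth_error Z i = Some (CClock x k t) /\ is_upper_cmp k.

(** UB(Z, psi) for psi the i-th conjunct: in Z (if psi non-strict) or in the
    upper closure (if psi strict), the conjunct x <= plt (obtained from psi)
    is replaced by x = plt; all other conjuncts are kept. *)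
Definition UB (X P : Type) (Z : zone X P) (i : nat) (v : valuation X P) : Prop :=
  exists x k t, nth_error Z i = Some (CClock x k t) /\
    vX v x = eval_lt v t /\
    if is_strict k then
      (forall y, 0 < vX v y) /\ (forall p, (0 <= vP v p)%Q) /\
      (forall j c, j <> i -> nth_error Z j = Some c -> sat_closU c v)
    else
      valid_val v /\
      (forall j c, j <> i -> nth_error Z j = Some c -> sat_constr c v).

(** L_Temp(Z): explicit lower conjuncts (by index) and implicit x >= 0. *)
Inductive lpsi (X : Type) := LExpl : nat -> lpsi X | LImpl : X -> lpsi X.
Arguments LExpl {X}.
Arguments LImpl {X}.

Definition in_LTemp (X P : Type) (Z : zone X P) (psi : lpsi X) : Prop :=
  match psi with
  | LExpl i => exists x k t, nth_error Z i = Some (CClock x k t) /\ is_lower_cmp k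
  | LImpl _ => True
  end.

Definition LB (X P : Type) (Z : zone X P) (psi : lpsi X) (v : valuation X P) : Prop :=
  match psi with
  | LExpl i =>
      exists x k t, nth_error Z i = Some (CClock x k t) /\
        vX v x = eval_lt v t /\
        if is_strict k then
          valid_val v /\
          (forall j c, j <> i -> nth_error Z j = Some c -> sat_closL c v)
        else
          valid_val v /\
          (forall j c, j <> i -> nth_error Z j = Some c -> sat_constr c v)
  | LImpl x =>
      (* implicit x >= 0 is non-strict: replaced by x = 0 in Z *)
      in_zone Z v /\ vX v x = 0
  end.

Definition UB_union (X P : Type) (Z : zone X P) (w : valuation X P) : Prop :=
  exists i, in_UTemp Z i /\ UB Z i w.

Definition LB_union (X P : Type) (Z : zone X P) (w : valuation X P) : Prop :=
  exists psi, in_LTemp Z psi /\ LB Z psi w.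

(* Main.v *)
Require Import Defs.
From Stdlib Require Import Reals QArith Qreals List Lra Lia Classical FunctionalExtensionality.
Open Scope R_scope.
Set Implicit Arguments.

Lemma shift_shift (X P : Type) (v : valuation X P) a b : shift (shift v a) b = shift v (a + b).
Proof. unfold shift; simpl; f_equal; apply functional_extensionality; intro; ring. Qed.

Lemma shift_0 (X P : Type) (v : valuation X P) : shift v 0 = v.
Proof. destruct v as [f g]; unfold shift; simpl; f_equal; apply functional_extensionality; intro; ring. Qed.

Lemma eval_lt_shift (X P : Type) (v : valuation X P) d t : eval_lt (shift v d) t = eval_lt v t.
Proof. reflexivity. Qed.

Ltac norm := cbn [sat_constr sat_closU sat_closL sem_cmp] in *;
  rewrite ?eval_lt_shift in *; cbn [vX vP shift] in *.

Lemma list_eps (A : Type) (l : list A) (Q : A -> R -> Prop) :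
  (forall a, In a l -> exists e, 0 < e /\ forall d, 0 < d <= e -> Q a d) ->
  exists e, 0 < e /\ forall a, In a l -> forall d, 0 < d <= e -> Q a d.
Proof.
  induction l as [|a l IH]; intros H.
  - exists 1; split; [lra|]; intros a Ha; destruct Ha.
  - destruct (H a (or_introl eq_refl)) as [e1 [He1 H1]].
    destruct IH as [e2 [He2 H2]]; [intros b Hb; apply H; right; exact Hb|].
    exists (Rmin e1 e2); split; [apply Rmin_glb_lt; lra|].
    intros b [<-|Hb] d Hd.
    + apply H1; pose proof (Rmin_l e1 e2); lra.
    + apply H2; auto; pose proof (Rmin_r e1 e2); lra.
Qed.

Lemma zone_eps (X P : Type) (Z : zone X P) (Q : nat -> constr X P -> R -> Prop) :
  (forall j c, nth_error Z j = Some c -> exists e, 0 < e /\ forall d, 0 < d <= e -> Q j c d) ->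
  exists e, 0 < e /\ forall j c d, nth_error Z j = Some c -> 0 < d <= e -> Q j c d.
Proof.
  intros H.
  destruct (@list_eps nat (seq 0 (length Z)) (fun j d => forall c, nth_error Z j = Some c -> Q j c d))
    as [e [He He']].
  - intros j _. destruct (nth_error Z j) as [c|] eqn:E.
    + destruct (H j c E) as [e [He He']]. exists e; split; auto.
      intros d Hd c' Hc'. injection Hc' as <-. auto.
    + exists 1; split; [lra|]. intros d _ c' Hc'; discriminate.
  - exists e; split; auto. intros j c d Hj Hd. apply (He' j); auto.
    apply in_seq. assert (j < length Z)%nat by (apply nth_error_Some; congruence). lia.
Qed.

Lemma clock_eps (X : Type) (HX : exists lX : list X, forall x, In x lX) (f : X -> R) :
  (forall x, 0 < f x) -> exists e, 0 < e /\ forall x, e <= f x.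
Proof.
  intros Hf. destruct HX as [lX HlX].
  destruct (@list_eps X lX (fun x d => d <= f x)) as [e [He He']].
  - intros a _. exists (f a); split; auto. intros; lra.
  - exists e; split; auto. intros x; apply (He' x (HlX x)); lra.
Qed.

Lemma zone_conv (X P : Type) (Z : zone X P) v a b d :
  in_zone Z (shift v a) -> in_zone Z (shift v b) -> a <= d <= b -> in_zone Z (shift v d).
Proof.
  intros [[Ha Hpa] Ha'] [[Hb Hpb] Hb'] Hd. split; [split|].
  - intros x; specialize (Ha x); specialize (Hb x); norm; lra.
  - exact Hpa.
  - intros j c Hj. specialize (Ha' j c Hj); specialize (Hb' j c Hj).
    destruct c as [x k t|x y k t|t' k t]; destruct k; norm; lra.
Qed.

Lemma lim_le y T D : 0 < D -> (forall d, 0 <= d < D -> y + d <= T) -> y + D <= T.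
Proof.
  intros HD H. apply Rnot_lt_le; intro Hc.
  assert (H0 := H 0 ltac:(lra)).
  assert (H1 := H ((T - y + D)/2) ltac:(lra)). lra.
Qed.

Lemma below_up (X P : Type) (Z : zone X P) v D :
  in_zone Z v -> is_lub (fun d => 0 <= d /\ in_zone Z (shift v d)) D ->
  forall d, 0 <= d < D -> in_zone Z (shift v d).
Proof.
  intros Hv [Hub Hl] d Hd.
  destruct (classic (exists e, (0 <= e /\ in_zone Z (shift v e)) /\ d < e)) as [[e [[He1 He2] He3]]|Hn].
  - apply (@zone_conv X P Z v 0 e); [rewrite shift_0; exact Hv| exact He2| lra].
  - assert (D <= d); [|lra]. apply Hl. intros e He. apply Rnot_lt_le; intro; apply Hn; eauto.
Qed.

Lemma below_down (X P : Type) (Z : zone X P) v D :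
  in_zone Z v -> is_lub (fun d => 0 <= d /\ in_zone Z (shift v (- d))) D ->
  forall d, 0 <= d < D -> in_zone Z (shift v (- d)).
Proof.
  intros Hv [Hub Hl] d Hd.
  destruct (classic (exists e, (0 <= e /\ in_zone Z (shift v (- e))) /\ d < e)) as [[e [[He1 He2] He3]]|Hn].
  - apply (@zone_conv X P Z v (- e) 0); [exact He2|rewrite shift_0; exact Hv| lra].
  - assert (D <= d); [|lra]. apply Hl. intros e He. apply Rnot_lt_le; intro; apply Hn; eauto.
Qed.

Lemma lim_up (X P : Type) (Z : zone X P) v D : 0 < D ->
  (forall d, 0 <= d < D -> in_zone Z (shift v d)) ->
  forall j c, nth_error Z j = Some c -> sat_closU c (shift v D).
Proof.
  intros HD H j c Hj.
  assert (Hc : forall d, 0 <= d < D -> sat_constr c (shift v d)) by (intros d Hd; exact (proj2 (H d Hd) j c Hj)).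
  assert (H0 := Hc 0 ltac:(lra)). assert (H2 := Hc (D/2) ltac:(lra)).
  destruct c as [x k t|x y k t|t' k t]; destruct k; norm; try lra.
  all: apply lim_le; auto; intros d Hd; specialize (Hc d Hd); norm; lra.
Qed.

Lemma lim_down (X P : Type) (Z : zone X P) v D : 0 < D ->
  (forall d, 0 <= d < D -> in_zone Z (shift v (- d))) ->
  valid_val (shift v (- D)) /\
  forall j c, nth_error Z j = Some c -> sat_closL c (shift v (- D)).
Proof.
  intros HD H. split; [split|].
  - intros x. assert (Hc : forall d, 0 <= d < D -> (- vX v x) + d <= 0).
    { intros d Hd. destruct (H d Hd) as [[Hx _] _]. specialize (Hx x); norm; lra. }
    pose proof (lim_le HD Hc). norm; lra.
  - destruct (H 0 ltac:(lra)) as [[_ Hp] _]. exact Hp.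
  - intros j c Hj.
  assert (Hc : forall d, 0 <= d < D -> sat_constr c (shift v (- d))) by (intros d Hd; exact (proj2 (H d Hd) j c Hj)).
  assert (H0 := Hc 0 ltac:(lra)). assert (H2 := Hc (D/2) ltac:(lra)).
  destruct c as [x k t|x y k t|t' k t]; destruct k; norm; try lra.
  all: assert (Hl : forall d, 0 <= d < D -> (- vX v x) + d <= - eval_lt v t)
      by (intros d Hd; specialize (Hc d Hd); norm; lra);
    pose proof (lim_le HD Hl); lra.
Qed.

Lemma up_back (X P : Type) (Z : zone X P) v D :
  in_zone Z v -> is_lub (fun d => 0 <= d /\ in_zone Z (shift v d)) D ->
  UB_union Z (shift v D).
Proof.
  intros Hv Hlub.
  assert (S0 : 0 <= 0 /\ in_zone Z (shift v 0)) by (rewrite shift_0; split; [lra|exact Hv]).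
  assert (HD : 0 <= D) by (apply (proj1 Hlub); exact S0).
  assert (Hbelow := below_up Hv Hlub).
  destruct (classic (in_zone Z (shift v D))) as [Hin|Hnin].
  - apply NNPP; intro Hno.
    assert (Htight : forall j x k t, nth_error Z j = Some (CClock x k t) -> (k = CLe \/ k = CEq) ->
                vX (shift v D) x <> eval_lt (shift v D) t).
    { intros j x k t Hj Hk Heq. apply Hno. exists j. split.
      - exists x, k, t. split; auto. unfold is_upper_cmp; tauto.
      - exists x, k, t. split; auto. split; auto.
        destruct Hk as [-> | ->]; simpl; destruct Hin as [Hval Hall]; split; auto; intros; eapply Hall; eauto. }
    destruct (@zone_eps X P Z (fun j c d => sat_constr c (shift (shift v D) d))) as [e [He He']].
    { intros j c Hj. destruct Hin as [_ Hall]. specialize (Hall j c Hj).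
      destruct c as [x k t|x y k t|t' k t].
      - specialize (Htight j x k t Hj).
        destruct k; norm.
        + exists ((eval_lt v t - (vX v x + D))/2); split; [lra|]. intros d Hd; norm; lra.
        + assert (vX v x + D <> eval_lt v t) by (apply Htight; auto).
          exists ((eval_lt v t - (vX v x + D))/2); split; [lra|]. intros d Hd; norm; lra.
        + exfalso; apply Htight; auto.
        + exists 1; split; [lra|]. intros d Hd; norm; lra.
        + exists 1; split; [lra|]. intros d Hd; norm; lra.
      - exists 1; split; [lra|]. intros d Hd; destruct k; norm; lra.
      - exists 1; split; [lra|]. intros d Hd; destruct k; norm; lra. }
    assert (Hz : in_zone Z (shift v (D + e))).
    { rewrite <- shift_shift. split; [split|].
      - intros x. destruct Hin as [[Hx _] _]. specialize (Hx x). norm; lra.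
      - destruct Hin as [[_ Hp] _]; exact Hp.
      - intros j c Hj. apply (He' j c e Hj). lra. }
    assert (D + e <= D) by (apply (proj1 Hlub); split; [lra|exact Hz]). lra.
  - assert (HD' : 0 < D).
    { destruct (Req_dec D 0) as [E|E]; [|lra]. rewrite E, shift_0 in Hnin. contradiction. }
    assert (Hcl := lim_up HD' Hbelow).
    assert (Hpos : forall x, 0 < vX (shift v D) x).
    { intros x. destruct Hv as [[Hx _] _]. specialize (Hx x). norm; lra. }
    assert (Hp : forall p, (0 <= vP (shift v D) p)%Q) by (destruct Hv as [[_ Hp] _]; exact Hp).
    assert (Hex : exists j c, nth_error Z j = Some c /\ ~ sat_constr c (shift v D)).
    { apply NNPP; intro Hn. apply Hnin. split.
      - split; [intros x; specialize (Hpos x); lra|exact Hp].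
      - intros j c Hj. apply NNPP; intro Hs. apply Hn; eauto. }
    destruct Hex as [j [c [Hj Hs]]].
    assert (Hcj := Hcl j c Hj).
    destruct c as [x k t|x y k t|t' k t].
    + destruct k; norm; try (exfalso; lra).
      exists j. split.
      * exists x, CLt, t. split; auto. unfold is_upper_cmp; tauto.
      * exists x, CLt, t. split; auto. split; [norm; lra|]. simpl.
        split; [exact Hpos|]. split; [exact Hp|]. intros j' c' _ Hj'. exact (Hcl j' c' Hj').
    + exfalso; apply Hs. destruct Hv as [_ Hall]. specialize (Hall j _ Hj). destruct k; norm; lra.
    + exfalso; apply Hs. destruct Hv as [_ Hall]. specialize (Hall j _ Hj). destruct k; norm; lra.
Qed.

Lemma down_back (X P : Type) (HX : exists lX : list X, forall x, In x lX) (Z : zone X P) v D :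
  in_zone Z v -> is_lub (fun d => 0 <= d /\ in_zone Z (shift v (- d))) D ->
  LB_union Z (shift v (- D)).
Proof.
  intros Hv Hlub.
  assert (S0 : 0 <= 0 /\ in_zone Z (shift v (- 0))) by (rewrite Ropp_0, shift_0; split; [lra|exact Hv]).
  assert (HD : 0 <= D) by (apply (proj1 Hlub); exact S0).
  assert (Hbelow := below_down Hv Hlub).
  destruct (classic (in_zone Z (shift v (- D)))) as [Hin|Hnin].
  - apply NNPP; intro Hno.
    assert (Htight : forall j x k t, nth_error Z j = Some (CClock x k t) -> (k = CGe \/ k = CEq) ->
                vX (shift v (- D)) x <> eval_lt (shift v (- D)) t).
    { intros j x k t Hj Hk Heq. apply Hno. exists (LExpl j). split.
      - exists x, k, t. split; auto. unfold is_lower_cmp; tauto.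
      - exists x, k, t. split; auto. split; auto.
        destruct Hk as [-> | ->]; simpl; destruct Hin as [Hval Hall]; split; auto; intros; eapply Hall; eauto. }
    assert (Hclk : forall x, 0 < vX (shift v (- D)) x).
    { intros x. pose proof (proj1 (proj1 Hin) x) as Hx.
      destruct (Req_dec (vX (shift v (- D)) x) 0) as [E|E]; [|lra].
      exfalso; apply Hno. exists (LImpl x). split; [exact I|]. split; [exact Hin| exact E]. }
    destruct (clock_eps HX _ Hclk) as [e1 [He1 He1']].
    destruct (@zone_eps X P Z (fun j c d => sat_constr c (shift (shift v (- D)) (- d)))) as [e [He He']].
    { intros j c Hj. destruct Hin as [_ Hall]. specialize (Hall j c Hj).
      destruct c as [x k t|x y k t|t' k t].
      - specialize (Htight j x k t Hj).
        destruct k; norm.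
        + exists 1; split; [lra|]. intros d Hd; norm; lra.
        + exists 1; split; [lra|]. intros d Hd; norm; lra.
        + exfalso; apply Htight; auto.
        + assert (vX v x + - D <> eval_lt v t) by (apply Htight; auto).
          exists ((vX v x + - D - eval_lt v t)/2); split; [lra|]. intros d Hd; norm; lra.
        + exists ((vX v x + - D - eval_lt v t)/2); split; [lra|]. intros d Hd; norm; lra.
      - exists 1; split; [lra|]. intros d Hd; destruct k; norm; lra.
      - exists 1; split; [lra|]. intros d Hd; destruct k; norm; lra. }
    set (m := Rmin e e1).
    assert (Hm : 0 < m) by (apply Rmin_glb_lt; lra).
    assert (Hz : in_zone Z (shift v (- (D + m)))).
    { replace (- (D + m)) with (- D + - m) by ring. rewrite <- shift_shift. split; [split|].
      - intros x. specialize (He1' x). pose proof (Rmin_r e e1). fold m in H. norm; lra.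
      - destruct Hin as [[_ Hp] _]; exact Hp.
      - intros j c Hj. apply (He' j c m Hj). pose proof (Rmin_l e e1). fold m in H. lra. }
    assert (D + m <= D) by (apply (proj1 Hlub); split; [lra|exact Hz]). lra.
  - assert (HD' : 0 < D).
    { destruct (Req_dec D 0) as [E|E]; [|lra]. rewrite E, Ropp_0, shift_0 in Hnin. contradiction. }
    destruct (lim_down HD' Hbelow) as [Hval Hcl].
    assert (Hex : exists j c, nth_error Z j = Some c /\ ~ sat_constr c (shift v (- D))).
    { apply NNPP; intro Hn. apply Hnin. split; [exact Hval|].
      intros j c Hj. apply NNPP; intro Hs. apply Hn; eauto. }
    destruct Hex as [j [c [Hj Hs]]].
    assert (Hcj := Hcl j c Hj).
    destruct c as [x k t|x y k t|t' k t].
    + destruct k; norm; try (exfalso; lra).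
      exists (LExpl j). split.
      * exists x, CGt, t. split; auto. unfold is_lower_cmp; tauto.
      * exists x, CGt, t. split; auto. split; [norm; lra|]. simpl.
        split; [exact Hval|]. intros j' c' _ Hj'. exact (Hcl j' c' Hj').
    + exfalso; apply Hs. destruct Hv as [_ Hall]. specialize (Hall j _ Hj). destruct k; norm; lra.
    + exfalso; apply Hs. destruct Hv as [_ Hall]. specialize (Hall j _ Hj). destruct k; norm; lra.
Qed.

Lemma up_fwd (X P : Type) (HX : exists lX : list X, forall x, In x lX) (Z : zone X P) w :
  UB_union Z w ->
  exists (v : valuation X P) (dsup : R),
       in_zone Z v /\
       is_lub (fun d => 0 <= d /\ in_zone Z (shift v d)) dsup /\
       w = shift v dsup.
Proof.
  intros [i [[x0 [k0 [t0 [Hi0 Hk0]]]] [x [k [t [Hi [Heq Hrest]]]]]]].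
  rewrite Hi0 in Hi; injection Hi as -> -> ->.
  destruct Hk0 as [ -> | [ -> | -> ] ]; simpl in Hrest.
  - destruct Hrest as [Hpos [Hp Hcl]].
    destruct (clock_eps HX _ Hpos) as [e1 [He1 He1']].
    destruct (@zone_eps X P Z (fun j c d => sat_constr c (shift w (- d)))) as [e [He He']].
    { intros j c Hj. destruct (Nat.eq_dec j i) as [->|Hne].
      - rewrite Hi0 in Hj; injection Hj as <-. exists 1; split; [lra|]. intros d Hd; norm; lra.
      - specialize (Hcl j c Hne Hj).
        destruct c as [y k t'|y y' k t'|t'' k t']; destruct k; norm;
        try (exists 1; split; [lra|]; intros d Hd; norm; lra);
        try (exfalso; lra);
        exists ((vX w y - eval_lt w t')/2); split; try lra; intros d Hd; norm; lra. }
    set (m := Rmin e e1).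
    assert (Hm : 0 < m) by (apply Rmin_glb_lt; lra).
    assert (Hm1 : m <= e) by apply Rmin_l. assert (Hm2 : m <= e1) by apply Rmin_r.
    assert (Good : forall d, 0 < d <= m -> in_zone Z (shift w (- d))).
    { intros d Hd. split; [split|].
      - intros y. specialize (He1' y). norm; lra.
      - exact Hp.
      - intros j c Hj. apply (He' j c d Hj). lra. }
    exists (shift w (- m)), m. split; [apply Good; lra|]. split; [split|].
    + intros d [Hd0 Hz]. rewrite shift_shift in Hz. destruct Hz as [_ Hz].
      specialize (Hz i _ Hi0). norm; lra.
    + intros b Hb.
      assert (H0 : 0 <= b) by (apply Hb; split; [lra|]; rewrite shift_0; apply Good; lra).
      apply Rnot_lt_le; intro Hbm.
      assert ((b + m)/2 <= b); [|lra]. apply Hb. split; [lra|].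
      rewrite shift_shift. replace (- m + (b + m) / 2) with (- ((m - b)/2)) by field.
      apply Good; lra.
    + rewrite shift_shift. replace (- m + m) with 0 by ring. rewrite shift_0; reflexivity.
  - destruct Hrest as [Hval Hall].
    assert (Hin : in_zone Z w).
    { split; auto. intros j c Hj. destruct (Nat.eq_dec j i) as [->|Hne].
      - rewrite Hi0 in Hj; injection Hj as <-. norm; lra.
      - eauto. }
    exists w, 0. split; auto. split; [split|].
    + intros d [Hd0 [_ Hz]]. specialize (Hz i _ Hi0). norm; lra.
    + intros b Hb. apply Hb. rewrite shift_0; split; [lra|exact Hin].
    + rewrite shift_0; reflexivity.
  - destruct Hrest as [Hval Hall].
    assert (Hin : in_zone Z w).
    { split; auto. intros j c Hj. destruct (Nat.eq_dec j i) as [->|Hne].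
      - rewrite Hi0 in Hj; injection Hj as <-. norm; lra.
      - eauto. }
    exists w, 0. split; auto. split; [split|].
    + intros d [Hd0 [_ Hz]]. specialize (Hz i _ Hi0). norm; lra.
    + intros b Hb. apply Hb. rewrite shift_0; split; [lra|exact Hin].
    + rewrite shift_0; reflexivity.
Qed.

Lemma down_fwd (X P : Type) (Z : zone X P) w :
  LB_union Z w ->
  exists (v : valuation X P) (dsup : R),
       in_zone Z v /\
       is_lub (fun d => 0 <= d /\ in_zone Z (shift v (- d))) dsup /\
       w = shift v (- dsup).
Proof.
  intros [[i|x] [HL HLB]].
  - destruct HL as [x0 [k0 [t0 [Hi0 Hk0]]]].
    destruct HLB as [x [k [t [Hi [Heq Hrest]]]]].
    rewrite Hi0 in Hi; injection Hi as -> -> ->.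
    destruct Hk0 as [ -> | [ -> | -> ] ]; simpl in Hrest.
    + destruct Hrest as [Hval Hcl].
      destruct (@zone_eps X P Z (fun j c d => sat_constr c (shift w d))) as [e [He He']].
      { intros j c Hj. destruct (Nat.eq_dec j i) as [->|Hne].
        - rewrite Hi0 in Hj; injection Hj as <-. exists 1; split; [lra|]. intros d Hd; norm; lra.
        - specialize (Hcl j c Hne Hj).
          destruct c as [y k t'|y y' k t'|t'' k t']; destruct k; norm;
          try (exists 1; split; [lra|]; intros d Hd; norm; lra);
          try (exfalso; lra);
          exists ((eval_lt w t' - vX w y)/2); split; try lra; intros d Hd; norm; lra. }
      assert (Good : forall d, 0 < d <= e -> in_zone Z (shift w d)).
      { intros d Hd. split; [split|].
        - intros y. destruct Hval as [Hy _]. specialize (Hy y). norm; lra.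
        - exact (proj2 Hval).
        - intros j c Hj. apply (He' j c d Hj). lra. }
      exists (shift w e), e. split; [apply Good; lra|]. split; [split|].
      * intros d [Hd0 Hz]. rewrite shift_shift in Hz. destruct Hz as [_ Hz].
        specialize (Hz i _ Hi0). norm; lra.
      * intros b Hb.
        assert (H0 : 0 <= b) by (apply Hb; split; [lra|]; rewrite Ropp_0, shift_0; apply Good; lra).
        apply Rnot_lt_le; intro Hbm.
        assert ((b + e)/2 <= b); [|lra]. apply Hb. split; [lra|].
        rewrite shift_shift. replace (e + - ((b + e) / 2)) with ((e - b)/2) by field.
        apply Good; lra.
      * rewrite shift_shift. replace (e + - e) with 0 by ring. rewrite shift_0; reflexivity.
    + destruct Hrest as [Hval Hall].
      assert (Hin : in_zone Z w).
      { split; auto. intros j c Hj. destruct (Nat.eq_dec j i) as [->|Hne].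
        - rewrite Hi0 in Hj; injection Hj as <-. norm; lra.
        - eauto. }
      exists w, 0. split; auto. split; [split|].
      * intros d [Hd0 [_ Hz]]. specialize (Hz i _ Hi0). norm; lra.
      * intros b Hb. apply Hb. rewrite Ropp_0, shift_0; split; [lra|exact Hin].
      * rewrite Ropp_0, shift_0; reflexivity.
    + destruct Hrest as [Hval Hall].
      assert (Hin : in_zone Z w).
      { split; auto. intros j c Hj. destruct (Nat.eq_dec j i) as [->|Hne].
        - rewrite Hi0 in Hj; injection Hj as <-. norm; lra.
        - eauto. }
      exists w, 0. split; auto. split; [split|].
      * intros d [Hd0 [_ Hz]]. specialize (Hz i _ Hi0). norm; lra.
      * intros b Hb. apply Hb. rewrite Ropp_0, shift_0; split; [lra|exact Hin].
      * rewrite Ropp_0, shift_0; reflexivity.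
  - destruct HLB as [Hin Hx0].
    exists w, 0. split; auto. split; [split|].
    + intros d [Hd0 [[Hz _] _]]. specialize (Hz x). norm; lra.
    + intros b Hb. apply Hb. rewrite Ropp_0, shift_0; split; [lra|exact Hin].
    + rewrite Ropp_0, shift_0; reflexivity.
Qed.

Unset Implicit Arguments.

Theorem theorem2 (X P : Type)
  (HX : exists lX : list X, forall x, In x lX)
  (HP : exists lP : list P, forall p, In p lP)
  (Z : zone X P) :
  (forall w : valuation X P,
     UB_union Z w <->
     exists (v : valuation X P) (dsup : R),
       in_zone Z v /\
       is_lub (fun d => 0 <= d /\ in_zone Z (shift v d)) dsup /\
       w = shift v dsup)
  /\
  (forall w : valuation X P,
     LB_union Z w <->
     exists (v : valuation X P) (dsup : R),
       in_zone Z v /\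
       is_lub (fun d => 0 <= d /\ in_zone Z (shift v (- d))) dsup /\
       w = shift v (- dsup)).
Proof.
  split; intros w; split.
  - apply up_fwd; exact HX.
  - intros [v [d [Hv [Hl ->]]]]. apply up_back; auto.
  - apply down_fwd.
  - intros [v [d [Hv [Hl ->]]]]. apply down_back; auto.
Qed.
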